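(* Let $\mathcal{X},\mathcal{Y}$ be finite, $p(X,Y)\in\Delta_{\mathcal{X}\times\mathcal{Y}}$ with $p(X)$ of full support, $\Lambda:=I(X;Y)$. For every $0\le\lambda\le\Lambda$, every $q(T|X)\in\mathrm{IB}(\lambda)$ factorises as $q(T|X)=\bar q\circ\pi_{\mathcal{X}}$, i.e. $q(t|x)=\bar q(t|\pi_{\mathcal{X}}(x))$ for all $x,t$.
   Context: $\mathcal{T}=\mathbb{N}$. For $q(T|X)\in C(\mathcal{X},\mathcal{T})$ the joint is $q(x,y,t)=p(x,y)q(t|x)$. $\mathrm{IB}(\lambda):=\operatorname{argmin}\{I_q(X;T): q(T|X)\in C(\mathcal{X},\mathcal{T}),\ I_q(T;Y)\ge\lambda\}$. The relation $x\sim_{\mathcal{X}}x'\iff p(Y|x)=p(Y|x')$ has partition $\bar{\mathcal{X}}=\{\mathcal{X}_j\}_j$ and projection $\pi_{\mathcal{X}}$; $\bar q(t|\mathcal{X}_j):=\frac{\sum_{x\in\mathcal{X}_j}q(t|x)p(x)}{p(\mathcal{X}_j)}$. *)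

(* Defs.v *)
From HB Require Import structures.
From mathcomp Require Import all_boot all_order all_algebra.
From mathcomp Require Import all_classical all_reals all_analysis.
Set Implicit Arguments. Unset Strict Implicit. Unset Printing Implicit Defensive.
Import Order.TTheory GRing.Theory Num.Theory.
Local Open Scope ring_scope.
Local Open Scope classical_set_scope.

(* Information bottleneck setting.  X, Y finite types, T = nat.
   A joint distribution is p : X -> Y -> R; a channel q(t|x) is q : nat -> X -> R. *)

Section IB.
Variables (R : realType) (X Y : finType).

Definition xlogxy (a b : R) : R := if a == 0 then 0 else a * ln (a / b).

Definition is_joint_distr (p : X -> Y -> R) : Prop :=
  (forall x y, 0 <= p x y) /\ \sum_(x : X) \sum_(y : Y) p x y = 1.

Definition pX (p : X -> Y -> R) (x : X) : R := \sum_(y : Y) p x y.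
Definition pY (p : X -> Y -> R) (y : Y) : R := \sum_(x : X) p x y.

Definition mutinfXY (p : X -> Y -> R) : R :=
  \sum_(x : X) \sum_(y : Y) xlogxy (p x y) (pX p x * pY p y).

Definition is_channel (q : nat -> X -> R) : Prop :=
  (forall t x, 0 <= q t x) /\
  (forall x, (fun n : nat => \sum_(t < n) q t x) @ \oo --> (1 : R^o)).

Definition qT (p : X -> Y -> R) (q : nat -> X -> R) (t : nat) : R :=
  \sum_(x : X) pX p x * q t x.
Definition qTY (p : X -> Y -> R) (q : nat -> X -> R) (t : nat) (y : Y) : R :=
  \sum_(x : X) p x y * q t x.

(* I_q(X;T) = sum_t sum_x q(x,t) log (q(x,t) / (p(x) q(t))), as an extended
   real series over t (each t-summand is nonnegative). *)
Definition mutinfXT (p : X -> Y -> R) (q : nat -> X -> R) : \bar R :=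
  (\sum_(t <oo) (\sum_(x : X) xlogxy (pX p x * q t x) (pX p x * qT p q t))%:E)%E.

Definition mutinfTY (p : X -> Y -> R) (q : nat -> X -> R) : \bar R :=
  (\sum_(t <oo) (\sum_(y : Y) xlogxy (qTY p q t y) (qT p q t * pY p y))%:E)%E.

Definition in_IB (p : X -> Y -> R) (lam : R) (q : nat -> X -> R) : Prop :=
  [/\ is_channel q, (lam%:E <= mutinfTY p q)%E &
      forall q' : nat -> X -> R, is_channel q' -> (lam%:E <= mutinfTY p q')%E ->
        (mutinfXT p q <= mutinfXT p q')%E].

Definition pYgX (p : X -> Y -> R) (x : X) (y : Y) : R := p x y / pX p x.

Definition simX (p : X -> Y -> R) (x x' : X) : bool :=
  [forall y, pYgX p x y == pYgX p x' y].

(* the block X_j of x, and \bar q(t | X_j) *)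
Definition qbar (p : X -> Y -> R) (q : nat -> X -> R) (t : nat) (x : X) : R :=
  (\sum_(x' | simX p x' x) q t x' * pX p x') / (\sum_(x' | simX p x' x) pX p x').

End IB.

(* Main.v *)
Require Import Defs.
From HB Require Import structures.
From mathcomp Require Import all_boot all_order all_algebra.
From mathcomp Require Import all_classical all_reals all_analysis.
From mathcomp Require Import ring lra.
Import Order.TTheory GRing.Theory Num.Theory.
Set Implicit Arguments. Unset Strict Implicit. Unset Printing Implicit Defensive.
Local Open Scope ring_scope.
Local Open Scope classical_set_scope.

Section Aux.
Variables (R : realType) (X Y : finType) (p : X -> Y -> R).
Hypothesis hfull : forall x : X, 0 < pX p x.

Local Notation sim := (simX p).

Lemma sim_refl x : sim x x.
Proof. by apply/forallP => y. Qed.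
Lemma sim_sym x y : sim x y -> sim y x.
Proof. by move=> /forallP h; apply/forallP => z; rewrite eq_sym h. Qed.
Lemma sim_trans x y z : sim x y -> sim y z -> sim x z.
Proof.
move=> /forallP h1 /forallP h2; apply/forallP => w.
by rewrite (eqP (h1 w)) h2.
Qed.

Definition Sc (x : X) : R := \sum_(x' | sim x' x) pX p x'.
Definition Nb (h : X -> R) (x : X) : R := \sum_(x' | sim x' x) h x' * pX p x'.

Lemma Sc_gt0 x : 0 < Sc x.
Proof.
rewrite /Sc (bigD1 x) ?sim_refl //=.
apply: (lt_le_trans (hfull x)); rewrite lerDl sumr_ge0 // => i _.
exact: ltW.
Qed.

Lemma sim_eqbig x x' (F : X -> R) : sim x' x ->
  \sum_(z | sim z x') F z = \sum_(z | sim z x) F z.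
Proof.
move=> H; apply: eq_bigl => z; apply/idP/idP => h.
- exact: sim_trans h H.
- exact: sim_trans h (sim_sym H).
Qed.

Lemma L_ (h F : X -> R) : (forall x x', sim x' x -> F x' = F x) ->
  \sum_x pX p x * F x * (Nb h x / Sc x) = \sum_x h x * pX p x * F x.
Proof.
move=> HF.
have E : forall x, pX p x * F x * (Nb h x / Sc x) =
   \sum_(x' : X) (if sim x' x then h x' * pX p x' * (pX p x * F x / Sc x) else 0).
  move=> x; rewrite -big_mkcond /=.
  transitivity (Nb h x * (pX p x * F x / Sc x)); first by rewrite /Nb; ring.
  by rewrite /Nb big_distrl.
under eq_bigr do rewrite E.
rewrite exchange_big /=.
apply: eq_bigr => x' _.
rewrite -big_mkcond /= -big_distrr /=.
have -> : \sum_(i | sim x' i) pX p i * F i / Sc i =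
          \sum_(i | sim x' i) pX p i * (F x' / Sc x').
  apply: eq_bigr => i hi.
  rewrite (HF _ _ (sim_sym hi)) /Sc (sim_eqbig _ (sim_sym hi)).
  by rewrite mulrA.
rewrite -big_distrl /=.
have -> : \sum_(i | sim x' i) pX p i = Sc x'.
  by apply: eq_bigl => i; apply/idP/idP => /sim_sym.
have := Sc_gt0 x'; move=> hS.
congr (_ * _); rewrite mulrC -mulrA mulVf ?mulr1 //.
by rewrite gt_eqF.
Qed.

Lemma qbarE (q : nat -> X -> R) t x : qbar p q t x = Nb (q t) x / Sc x.
Proof. by []. Qed.

Lemma qbar_inv (q : nat -> X -> R) t x x' : sim x' x -> qbar p q t x' = qbar p q t x.
Proof. by move=> H; rewrite !qbarE /Nb /Sc !(sim_eqbig _ H). Qed.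

Lemma qT_qbar (q : nat -> X -> R) t : qT p (qbar p q) t = qT p q t.
Proof.
rewrite /qT.
transitivity (\sum_x pX p x * 1 * (Nb (q t) x / Sc x)).
  by apply: eq_bigr => x _; rewrite mulr1.
by rewrite (@L_ (q t) (fun _ => 1)) //; apply: eq_bigr => x _; rewrite mulr1 mulrC.
Qed.

Lemma pYgX_inv x x' y : sim x' x -> pYgX p x' y = pYgX p x y.
Proof. by move=> /forallP /(_ y) /eqP. Qed.

Lemma qTY_qbar (q : nat -> X -> R) t y : qTY p (qbar p q) t y = qTY p q t y.
Proof.
rewrite /qTY.
have Ep : forall x, p x y = pX p x * pYgX p x y.
  by move=> x; rewrite /pYgX mulrC divfK // gt_eqF.
transitivity (\sum_x pX p x * pYgX p x y * (Nb (q t) x / Sc x)).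
  by apply: eq_bigr => x _; rewrite Ep.
rewrite (@L_ (q t) (fun x => pYgX p x y)); last by move=> x x' H; exact: pYgX_inv.
by apply: eq_bigr => x _; rewrite Ep; ring.
Qed.

Lemma mutinfTY_qbar (q : nat -> X -> R) : mutinfTY p (qbar p q) = mutinfTY p q.
Proof.
rewrite /mutinfTY; apply: eq_eseriesr => t _.
by under eq_bigr do rewrite qTY_qbar qT_qbar.
Qed.

End Aux.

Lemma xlogxyE (R : realType) (a b : R) : xlogxy a b = a * ln (a / b).
Proof. by rewrite /xlogxy; case: eqP => [->|]; rewrite ?mul0r. Qed.

Lemma ln_le_sub1 (R : realType) (u : R) : 0 < u -> ln u <= u - 1.
Proof.
move=> hu; have := expR_ge1Dx (ln u); rewrite lnK ?posrE //; lra.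
Qed.

Lemma ln_eq_sub1 (R : realType) (u : R) : 0 < u -> u - 1 <= ln u -> u = 1.
Proof.
move=> hu h; have [h0|h0] := eqVneq (ln u) 0.
  by rewrite -(lnK (x:=u)) ?posrE // h0 expR0.
have := expR_gt1Dx h0; rewrite lnK ?posrE //; lra.
Qed.

Lemma kl_ge (R : realType) (a a' : R) : 0 < a -> 0 < a' -> a - a' <= a * ln (a / a').
Proof.
move=> ha ha'.
have hu : 0 < a' / a by rewrite divr_gt0.
have e : a / a' = (a' / a)^-1 by rewrite invf_div.
rewrite e lnV ?posrE //.
have := ln_le_sub1 hu.
have ea : a * (a' / a) = a' by rewrite mulrC divfK // gt_eqF.
set L := ln _; set u := a' / a in ea *; move=> hL.
nra.
Qed.

Lemma kl_eq (R : realType) (a a' : R) : 0 < a -> 0 < a' ->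
  a * ln (a / a') <= a - a' -> a = a'.
Proof.
move=> ha ha'.
have hu : 0 < a' / a by rewrite divr_gt0.
have e : a / a' = (a' / a)^-1 by rewrite invf_div.
rewrite e lnV ?posrE // => h.
have h1 := ln_le_sub1 hu.
have ea : a * (a' / a) = a' by rewrite mulrC divfK // gt_eqF.
have : a' / a - 1 <= ln (a' / a).
  move: h h1 ea; set L := ln _; set u := a' / a => h h1 ea.
  have : a * (u - 1 - L) <= 0 by nra.
  rewrite pmulr_rle0 //; lra.
move/(ln_eq_sub1 hu) => h2.
by rewrite -ea h2 mulr1.
Qed.

Lemma mulf_div2 (R : realType) (c u v : R) : c != 0 -> (c * u) / (c * v) = u / v.
Proof. by move=> hc; rewrite invfM mulrACA mulfV ?mul1r. Qed.

Section Aux2.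
Variables (R : realType) (X Y : finType) (p : X -> Y -> R).
Hypothesis hfull : forall x : X, 0 < pX p x.
Hypothesis hsum : \sum_x pX p x = 1.

Local Notation sim := (simX p).

Definition A (q : nat -> X -> R) (t : nat) : R :=
  \sum_(x : X) xlogxy (pX p x * q t x) (pX p x * qT p q t).

Lemma pX_neq0 x : pX p x != 0.
Proof. by rewrite gt_eqF. Qed.

Variable q : nat -> X -> R.
Hypothesis hq : forall t x, 0 <= q t x.

Lemma a_le t x : pX p x * q t x <= qT p q t.
Proof.
rewrite /qT (bigD1 x) //= lerDl sumr_ge0 // => i _.
by rewrite mulr_ge0 // ltW.
Qed.

Lemma qT_ge0 t : 0 <= qT p q t.
Proof. by rewrite sumr_ge0 // => i _; rewrite mulr_ge0 // ltW. Qed.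

Lemma qT0 t : qT p q t = 0 -> forall x, q t x = 0.
Proof.
move=> h x.
have := @psumr_eq0P _ _ xpredT (fun i => pX p i * q t i)
   (fun i _ => mulr_ge0 (ltW (hfull i)) (hq t i)) h x isT.
move=> /eqP.
by rewrite mulf_eq0 (negbTE (pX_neq0 x)) /= => /eqP.
Qed.

Lemma qbar_ge0 t x : 0 <= qbar p q t x.
Proof.
rewrite qbarE divr_ge0 //; last exact: ltW (Sc_gt0 hfull x).
rewrite /Nb sumr_ge0 // => i _.
by rewrite mulr_ge0 // ltW.
Qed.

Lemma qbar_gt0 t x : 0 < q t x -> 0 < qbar p q t x.
Proof.
move=> h; rewrite qbarE divr_gt0 ?Sc_gt0 //.
rewrite /Nb (bigD1 x) ?sim_refl //=.
apply: (lt_le_trans (mulr_gt0 h (hfull x))); rewrite lerDl sumr_ge0 // => i _.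
by rewrite mulr_ge0 // ltW.
Qed.

Lemma A_ge0 t : 0 <= A q t.
Proof.
have [s0|spos] := eqVneq (qT p q t) 0.
  rewrite /A big1 // => x _; by rewrite qT0 // mulr0 xlogxyE mul0r.
have sp : 0 < qT p q t by rewrite lt_neqAle eq_sym spos qT_ge0.
apply: (@le_trans _ _ (\sum_x (pX p x * q t x - pX p x * qT p q t))).
  rewrite sumrB -big_distrl /= hsum mul1r /qT subrr //.
apply: ler_sum => x _; rewrite xlogxyE.
have [q0|qp] := eqVneq (q t x) 0.
  by rewrite q0 mulr0 mul0r sub0r oppr_le0 mulr_ge0 // ltW.
have qp' : 0 < q t x by rewrite lt_neqAle eq_sym qp hq.
by apply: kl_ge; rewrite mulr_gt0.
Qed.

Lemma A_bound t : A q t <= \sum_x q t x * (pX p x * `|ln (pX p x)|).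
Proof.
apply: ler_sum => x _; rewrite xlogxyE.
have [q0|qp] := eqVneq (q t x) 0.
  by rewrite q0 mulr0 !mul0r.
have qp' : 0 < q t x by rewrite lt_neqAle eq_sym qp hq.
have sp : 0 < qT p q t := lt_le_trans (mulr_gt0 (hfull x) qp') (a_le t x).
rewrite mulf_div2 ?pX_neq0 //.
rewrite [X in _ <= X](_ : _ = pX p x * q t x * `|ln (pX p x)|); last by ring.
apply: ler_wpM2l; first by rewrite mulr_ge0 // ltW.
apply: (@le_trans _ _ (ln ((pX p x)^-1))).
  rewrite ler_ln ?posrE ?divr_gt0 ?invr_gt0 //.
  rewrite ler_pdivrMr // ler_pdivlMl //; exact: a_le.
by rewrite lnV ?posrE // -normrN ler_norm.
Qed.


Lemma A_qbar t : A (qbar p q) t <= A q t /\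
  (A q t <= A (qbar p q) t -> forall x, q t x = qbar p q t x).
Proof.
have [s0|spos] := eqVneq (qT p q t) 0.
  have E : forall x, qbar p q t x = q t x.
    move=> x; rewrite qT0 // qbarE /Nb big1 ?mul0r // => i _.
    by rewrite qT0 // mul0r.
  have -> : A (qbar p q) t = A q t.
    by rewrite /A qT_qbar //; apply: eq_bigr => x _; rewrite E.
  by split => // _ x; rewrite E.
have sp : 0 < qT p q t by rewrite lt_neqAle eq_sym spos qT_ge0.
set s := qT p q t.
have Aq' : A (qbar p q) t = \sum_x pX p x * q t x * ln (qbar p q t x / s).
  rewrite /A qT_qbar //.
  transitivity (\sum_x pX p x * ln (qbar p q t x / s) * (Nb p (q t) x / Sc p x)).
    apply: eq_bigr => x _; rewrite xlogxyE mulf_div2 ?pX_neq0 // -qbarE; ring.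
  rewrite (@L_ _ _ _ p hfull (q t) (fun x => ln (qbar p q t x / s))).
    by apply: eq_bigr => x _; ring.
  by move=> x x' H; rewrite (qbar_inv q t H).
have Aq : A q t = \sum_x pX p x * q t x * ln (q t x / s).
  by apply: eq_bigr => x _; rewrite xlogxyE mulf_div2 ?pX_neq0.
set d := fun x => pX p x * q t x * ln (q t x / s) - pX p x * q t x * ln (qbar p q t x / s).
set e := fun x => pX p x * q t x - pX p x * qbar p q t x.
have dge : forall x, e x <= d x.
  move=> x; rewrite /d /e.
  have [q0|qp] := eqVneq (q t x) 0.
    rewrite q0 mulr0 !mul0r subrr sub0r oppr_le0; apply: mulr_ge0.
      exact: ltW.
    exact: qbar_ge0.
  have qp' : 0 < q t x by rewrite lt_neqAle eq_sym qp hq.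
  have qb := qbar_gt0 qp'.
  move: qb; move: (qbar p q t x) => b qb.
  have -> : pX p x * q t x * ln (q t x / s) - pX p x * q t x * ln (b / s) =
     pX p x * (q t x * (ln (q t x) - ln b)).
    rewrite !ln_div ?posrE //. ring.
  rewrite -mulrBr ler_pM2l // -ln_div ?posrE //.
  exact: kl_ge.
have deq : forall x, d x <= e x -> q t x = qbar p q t x.
  move=> x; rewrite /d /e.
  have [q0|qp] := eqVneq (q t x) 0.
    rewrite q0 mulr0 !mul0r subrr sub0r oppr_ge0 pmulr_rle0 // => h.
    by apply/eqP; rewrite eq_le h qbar_ge0.
  have qp' : 0 < q t x by rewrite lt_neqAle eq_sym qp hq.
  have qb := qbar_gt0 qp'.
  move: qb; move: (qbar p q t x) => b qb.
  have -> : pX p x * q t x * ln (q t x / s) - pX p x * q t x * ln (b / s) =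
     pX p x * (q t x * (ln (q t x) - ln b)).
    rewrite !ln_div ?posrE //; ring.
  rewrite -mulrBr ler_pM2l // -ln_div ?posrE //.
  exact: kl_eq.
have se : \sum_x e x = 0.
  by rewrite /e sumrB /qT; have := qT_qbar hfull q t; rewrite /qT => ->; rewrite subrr.
have sd : A q t - A (qbar p q) t = \sum_x d x by rewrite Aq Aq' sumrB.
split.
  rewrite -subr_ge0 sd -[X in X <= _]se; apply: ler_sum => x _; exact: dge.
move=> h x; apply: deq.
have : \sum_x (d x - e x) = 0.
  apply/eqP; rewrite eq_le sumr_ge0 ?andbT; last by move=> i _; rewrite subr_ge0.
  by rewrite sumrB se subr0 -sd subr_le0.
have H0 : forall i, xpredT i -> 0 <= d i - e i by move=> i _; rewrite subr_ge0.
move/(@psumr_eq0P _ _ xpredT (fun x => d x - e x) H0) => /(_ x isT) /eqP.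
by rewrite subr_eq0 => /eqP ->.
Qed.
End Aux2.
Lemma cvg_finsum (R : realType) (I : Type) (r : seq I) (P : pred I)
  (f : I -> nat -> R) (l : I -> R) :
  (forall i, P i -> (fun n => f i n) @ \oo --> (l i : R^o)) ->
  (fun n => \sum_(i <- r | P i) f i n) @ \oo --> (\sum_(i <- r | P i) l i : R^o).
Proof.
move=> H; elim: r => [|a r IH].
  rewrite big_nil; under eq_fun do rewrite big_nil; exact: cvg_cst.
rewrite big_cons; under eq_fun do rewrite big_cons.
case: (boolP (P a)) => Pa; last by [].
exact: cvgD (H a Pa) IH.
Qed.

Lemma eseries_real (R : realType) (u : nat -> R) (l : R) :
  (fun n => \sum_(t < n) u t) @ \oo --> (l : R^o) ->
  (\sum_(t <oo) (u t)%:E = l%:E)%E.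
Proof.
move=> H.
have -> : (fun n => \sum_(0 <= t < n) (u t)%:E)%E = EFin \o (fun n => \sum_(t < n) u t).
  by apply: funext => n /=; rewrite sumEFin big_mkord.
rewrite EFin_lim; last exact: cvgP H.
by rewrite (cvg_lim _ H).
Qed.

Lemma qbar_channel (R : realType) (X Y : finType) (p : X -> Y -> R)
  (hfull : forall x : X, 0 < pX p x) (q : nat -> X -> R) :
  is_channel q -> is_channel (qbar p q).
Proof.
move=> [h1 h2]; split; first by move=> t x; exact: qbar_ge0.
move=> x.
have -> : (fun n => \sum_(t < n) qbar p q t x) =
   (fun n => (\sum_(x' | simX p x' x) (\sum_(t < n) q t x') * pX p x') * (Sc p x)^-1).
  apply: funext => n.
  rewrite /qbar -big_distrl /=; congr (_ * _).
  rewrite exchange_big /=; apply: eq_bigr => i _; by rewrite big_distrl.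
have -> : (1 : R^o) = (\sum_(x' | simX p x' x) 1 * pX p x') * (Sc p x)^-1.
  under eq_bigr do rewrite mul1r.
  by rewrite mulfV // gt_eqF // Sc_gt0.
apply: cvgMl; apply: cvg_finsum => i _; apply: cvgMl; exact: h2 i.
Qed.

Lemma mutinfXT_fin (R : realType) (X Y : finType) (p : X -> Y -> R)
  (hfull : forall x : X, 0 < pX p x) (hsum : \sum_x pX p x = 1)
  (q : nat -> X -> R) : is_channel q -> mutinfXT p q \is a fin_num.
Proof.
move=> [h1 h2].
have E : mutinfXT p q = (\sum_(t <oo) (A p q t)%:E)%E by [].
have Hge : (0 <= mutinfXT p q)%E.
  by rewrite E; apply: nneseries_ge0 => n _ _; rewrite lee_fin (A_ge0 hfull hsum h1).
rewrite ge0_fin_numE //.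
set c := fun x => pX p x * `|ln (pX p x)|.
apply: (@le_lt_trans _ _ (\sum_x c x)%:E); last exact: ltry.
rewrite E.
apply: (@le_trans _ _ (\sum_(t <oo) (\sum_x q t x * c x)%:E)%E).
  apply: lee_nneseries => [n _ _|n _]; first by rewrite lee_fin (A_ge0 hfull hsum h1).
  by rewrite lee_fin (A_bound hfull h1).
under eq_eseriesr do rewrite -sumEFin.
rewrite nneseries_sum; last first.
  by move=> i j _; rewrite lee_fin mulr_ge0 // mulr_ge0 ?normr_ge0 // ltW.
rewrite -sumEFin; apply: lee_sum => x _.
rewrite (@eseries_real _ _ (c x)) //.
have -> : (fun n => \sum_(t < n) q t x * c x) = (fun n => (\sum_(t < n) q t x) * c x).
  by apply: funext => n; rewrite big_distrl.
rewrite -[X in _ --> X]mul1r; apply: cvgMl; exact: h2 x.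
Qed.

Unset Implicit Arguments.
Local Close Scope classical_set_scope.

Theorem proposition1 (R : realType) (X Y : finType) (p : X -> Y -> R)
  (hp : is_joint_distr p) (hfull : forall x : X, 0 < pX p x)
  (lam : R) (hlam0 : 0 <= lam) (hlam1 : lam <= mutinfXY p)
  (q : nat -> X -> R) (hq : in_IB p lam q) :
  forall (x : X) (t : nat), q t x = qbar p q t x.
Proof.
move=> x t.
have hsum : \sum_x pX p x = 1 by case: hp.
case: hq => hch hlamq hmin.
have hch' := qbar_channel hfull hch.
have hle := hmin _ hch' (eq_ind_r (fun z => (lam%:E <= z)%E) hlamq (mutinfTY_qbar hfull q)).
have hq0 := hch.1.
have hq0' := hch'.1.
have fin := mutinfXT_fin hfull hsum hch'.
have key : forall t0, A p q t0 <= A p (qbar p q) t0.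
  move=> t0.
  set g := fun t => ((A p q t - A p (qbar p q) t)%:E)%E.
  have g0 : forall t, (0 <= g t)%E.
    by move=> t1; rewrite lee_fin subr_ge0; case: (A_qbar hfull hq0 t1).
  have f0 : forall t, (0 <= (A p (qbar p q) t)%:E)%E.
    by move=> t1; rewrite lee_fin (A_ge0 hfull hsum hq0').
  have E : mutinfXT p q =
     (\sum_(t <oo) (A p (qbar p q) t)%:E + \sum_(t <oo) g t)%E.
    rewrite -nneseriesD //; apply: eq_eseriesr => t1 _.
    by rewrite /g -EFinD addrC subrK.
  have E' : mutinfXT p (qbar p q) = (\sum_(t <oo) (A p (qbar p q) t)%:E)%E by [].
  rewrite E E' in hle fin.
  have sg : (\sum_(t <oo) g t <= 0)%E.
    by rewrite -(leeD2lE _ _ fin) adde0.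
  have : (g t0 <= 0)%E.
    apply: le_trans sg.
    apply: le_trans (nneseries_lim_ge t0.+1 (fun n _ _ => g0 n)).
    by rewrite big_nat_recr //= leeDr // sume_ge0.
  by rewrite lee_fin subr_le0.
by case: (A_qbar hfull hq0 t) => _ /(_ (key t)).
Qed.
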